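(* Consider a 1DPNN as described in the context, with $L\ge 2$ layers and a differentiable loss $\epsilon$. For every $l\in\{1,\dots,L-1\}$ and every $j\in\{1,\dots,N_l\}$, $$\frac{\partial \epsilon}{\partial y_{j}^{(l)}}=\sum_{d=1}^{D_{l+1}}d\left(\sum_{i=1}^{N_{l+1}}\tilde{w}_{ijd}^{(l+1)}*g_i^{(l+1)}\right)\odot\left(y_{j}^{(l)}\right)^{d-1},$$ where $\tilde{w}_{ijd}^{(l+1)}\in\mathbb{R}^{K_{l+1}}$ is given by $\tilde{w}_{ijd}^{(l+1)}(k)=w_{ijd}^{(l+1)}(K_{l+1}-1-k)$ for $k\in\{0,\dots,K_{l+1}-1\}$, and $g_i^{(l+1)}\in\mathbb{R}^{M_l+K_{l+1}-1}$ is the zero-padded vector defined for $n\in\{0,\dots,M_l+K_{l+1}-2\}$ by $g_i^{(l+1)}(n)=\frac{\partial \epsilon}{\partial x_i^{(l+1)}}(n-K_{l+1}+1)$ if $K_{l+1}-1\le n\le M_{l+1}+K_{l+1}-2$, and $g_i^{(l+1)}(n)=0$ otherwise. (Here $(y_j^{(l)})^0$ is the all-ones vector.)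
   Context: A 1DPNN with $L\ge 1$ layers is specified as follows. Layer $0$ is the input: $N_0$ signals $y_1^{(0)},\dots,y_{N_0}^{(0)}\in\mathbb{R}^{M_0}$ (entries indexed $0,\dots,M_0-1$). For each layer $l\in\{1,\dots,L\}$ there are positive integers $N_l$ (number of neurons), $K_l$ (kernel size) and $D_l$ (polynomial degree), with $M_l=M_{l-1}-K_l+1\ge 1$. Neuron $i$ of layer $l$ has weight vectors $w_{ijd}^{(l)}\in\mathbb{R}^{K_l}$ (entries indexed $0,\dots,K_l-1$) for $j\in\{1,\dots,N_{l-1}\}$, $d\in\{1,\dots,D_l\}$, a bias $b_i^{(l)}\in\mathbb{R}$, and a differentiable activation function $f_i^{(l)}:\mathbb{R}\to\mathbb{R}$ applied componentwise. Its pre-activation output $x_i^{(l)}\in\mathbb{R}^{M_l}$ and output $y_i^{(l)}\in\mathbb{R}^{M_l}$ are $$x_i^{(l)}(m)=\sum_{j=1}^{N_{l-1}}\sum_{d=1}^{D_l}\sum_{k=0}^{K_l-1}w_{ijd}^{(l)}(k)\,\big(y_j^{(l-1)}(m+k)\big)^d+b_i^{(l)},\qquad y_i^{(l)}=f_i^{(l)}\big(x_i^{(l)}\big),$$ for $m\in\{0,\dots,M_l-1\}$. Notation: $\odot$ is the componentwise (Hadamard) product, powers of vectors are componentwise, and for $a\in\mathbb{R}^{K}$, $b\in\mathbb{R}^{M'}$ with $M'\ge K$, $a*b\in\mathbb{R}^{M'-K+1}$ is defined by $(a*b)(m)=\sum_{k=0}^{K-1}a(k)\,b(m+k)$ (this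 operation is called convolution). A differentiable loss $\epsilon$ is a function of the network output $(y_1^{(L)},\dots,y_{N_L}^{(L)})$ (and a fixed desired output); for each layer $l$ it is viewed as a differentiable function of the outputs $y_1^{(l)},\dots,y_{N_l}^{(l)}$ of layer $l$, with all subsequent layers computed by the forward propagation above. $\frac{\partial\epsilon}{\partial y_i^{(l)}}\in\mathbb{R}^{M_l}$ denotes the vector of partial derivatives of $\epsilon$ with respect to the entries of $y_i^{(l)}$ in this sense, and $\frac{\partial\epsilon}{\partial x_i^{(l)}}=\frac{\partial \epsilon}{\partial y_{i}^{(l)}}\odot (f_i^{(l)})'(x_i^{(l)})$ (derivative applied componentwise). *)

(* Defs.v *)
From HB Require Import structures.
From mathcomp Require Import all_boot all_order all_algebra.
From mathcomp Require Import all_classical all_reals all_analysis.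
Set Implicit Arguments. Unset Strict Implicit. Unset Printing Implicit Defensive.
Import Order.TTheory GRing.Theory Num.Theory.
Import numFieldNormedType.Exports.
Local Open Scope ring_scope.

(* Conventions (as in the paper): neurons indexed 1..N_l, degrees 1..D_l,
   kernel entries 0..K_l-1, signal entries 0..M_l-1.  A layer's collection
   of signals is encoded as a function  neuron -> position -> R ; entries
   outside the index ranges are never used. *)
Definition signals (R : realType) := nat -> nat -> R.

Record pnn (R : realType) := PNN {
  L : nat;
  N : nat -> nat;
  K : nat -> nat;
  D : nat -> nat;
  M0 : nat;
  w : nat -> nat -> nat -> nat -> nat -> R;   (* w l i j d k = w_{ijd}^{(l)}(k) *)
  b : nat -> nat -> R;
  f : nat -> nat -> R -> R
}.

Section PNN.
Variables (R : realType) (P : pnn R).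

Fixpoint M (l : nat) : nat :=
  match l with 0 => M0 P | l'.+1 => (M l' - K P l'.+1 + 1)%N end.

Definition preact (l : nat) (y : signals R) (i m : nat) : R :=
  \sum_(1 <= j < (N P l.-1).+1) \sum_(1 <= d < (D P l).+1) \sum_(0 <= k < K P l)
      w P l i j d k * (y j (m + k)%N) ^+ d + b P l i.

Definition layer (l : nat) (y : signals R) : signals R :=
  fun i m => f P l i (preact l y i m).

Fixpoint run (l n : nat) (z : signals R) : signals R :=
  match n with 0 => z | n'.+1 => run l.+1 n' (layer l.+1 z) end.

Fixpoint outp (y0 : signals R) (l : nat) : signals R :=
  match l with 0 => y0 | l'.+1 => layer l'.+1 (outp y0 l') end.

Definition loss_at (eps : 'M[R]_(N P (L P), M (L P)) -> R) (l : nat)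
  (z : signals R) : R :=
  eps (\matrix_(i < N P (L P), m < M (L P)) run l (L P - l) z i.+1 m).

Definition upd (z : signals R) (j m : nat) (t : R) : signals R :=
  fun j' m' => if (j' == j) && (m' == m) then t else z j' m'.

Definition dEdy eps y0 (l j m : nat) : R :=
  derive1 (fun t => loss_at eps l (upd (outp y0 l) j m t)) (outp y0 l j m).

Definition dEdx eps y0 (l i m : nat) : R :=
  dEdy eps y0 l i m * derive1 (f P l i) (preact l (outp y0 l.-1) i m).

Definition conv1d (Kc : nat) (a bb : nat -> R) (m : nat) : R :=
  \sum_(0 <= k < Kc) a k * bb (m + k)%N.

Definition wflip (l i j d : nat) (k : nat) : R := w P l i j d (K P l - 1 - k)%N.

Definition gpad eps y0 (l i : nat) (n : nat) : R :=
  if ((K P l - 1 <= n) && (n <= M l + K P l - 2))%N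
  then dEdx eps y0 l i (n - (K P l - 1))%N else 0.

End PNN.

Arguments loss_at {R} P eps l z.
Arguments dEdy {R} P eps y0 l j m.
Arguments dEdx {R} P eps y0 l i m.
Arguments gpad {R} P eps y0 l i n.

(* Main.v *)
Require Import Defs.
From HB Require Import structures.
From mathcomp Require Import all_boot all_order all_algebra.
From mathcomp Require Import all_classical all_reals all_analysis.
From mathcomp Require Import zify ring lra.
Import Order.TTheory GRing.Theory Num.Theory.
Import numFieldNormedType.Exports.
Local Open Scope ring_scope.

Section Helpers.
Context {R : realType}.

Lemma isd_sum (s : seq nat) (F : nat -> R -> R) (dF : nat -> R) (t0 : R) :
  (forall i, i \in s -> is_derive (t0:R) (1:R) (F i) (dF i)) ->
  is_derive (t0:R) (1:R) (fun t => \sum_(i <- s) F i t) (\sum_(i <- s) dF i).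
Proof.
elim: s => [|a s IH] H.
  rewrite big_nil.
  have -> : (fun t : R => \sum_(i <- [::]) F i t) = cst 0.
    by apply/funext => t; rewrite big_nil.
  exact: is_derive_cst.
have -> : (fun t : R => \sum_(i <- a :: s) F i t) = F a + (fun t => \sum_(i <- s) F i t).
  by apply/funext => t; rewrite big_cons.
rewrite big_cons; apply: is_deriveD.
  by apply: H; rewrite inE eqxx.
by apply: IH => i Hi; apply: H; rewrite inE Hi orbT.
Qed.

Lemma isd_add (F G : R -> R) dF dG t0 :
  is_derive (t0:R) (1:R) F dF -> is_derive (t0:R) (1:R) G dG ->
  is_derive (t0:R) (1:R) (fun t => F t + G t) (dF + dG).
Proof. move=> h1 h2; exact: (is_deriveD h1 h2). Qed.

Lemma isd_cst (c : R) t0 : is_derive (t0:R) (1:R) (fun _ : R => c) 0.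
Proof. exact: is_derive_cst. Qed.

Lemma isd_id t0 : is_derive (t0:R) (1:R) (fun t : R => t) 1.
Proof. exact: is_derive_id. Qed.

Lemma isd_scal (c : R) (F : R -> R) dF t0 :
  is_derive (t0:R) (1:R) F dF -> is_derive (t0:R) (1:R) (fun t => c * F t) (c * dF).
Proof. move=> h; exact: (is_deriveZ c h). Qed.

Lemma isd_exp (F : R -> R) dF t0 d :
  is_derive (t0:R) (1:R) F dF -> is_derive (t0:R) (1:R) (fun t => F t ^+ d) (d%:R * F t0 ^+ d.-1 * dF).
Proof.
move=> h; have -> : (fun t => F t ^+ d) = F ^+ d.
  by apply/funext => t; rewrite exprfctE.
exact: (is_deriveX d h).
Qed.

Lemma isd_comp (g : R -> R) (F : R -> R) dF t0 :
  derivable g (F t0) 1 -> is_derive (t0:R) (1:R) F dF ->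
  is_derive (t0:R) (1:R) (fun t => g (F t)) (derive1 g (F t0) * dF).
Proof.
move=> dg dF'.
have dF1 : derivable F t0 1 by case: dF'.
apply: DeriveDef.
  apply/derivable1_diffP; apply: (@differentiable_comp _ _ _ _ F g).
    exact/derivable1_diffP.
  exact/derivable1_diffP.
rewrite -derive1E (derive1_comp dF1 dg) [derive1 F t0]derive1E.
by case: dF' => _ ->.
Qed.


Variable P : pnn R.

Definition inr (l i p : nat) := ((0 < i <= N P l) && (p < M P l))%N.

Definition Dlayer l (z v : signals R) : signals R := fun i p =>
  if inr l i p then derive1 (f P l i) (preact P l z i p) *
    \sum_(1 <= j < (N P l.-1).+1) \sum_(1 <= d < (D P l).+1) \sum_(0 <= k < K P l)
      (w P l i j d k * (d%:R * z j (p + k)%N ^+ d.-1 * v j (p+k)%N))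
  else 0.

Fixpoint Drun l n (z v : signals R) : signals R :=
  match n with 0 => v | n'.+1 => Drun l.+1 n' (layer P l.+1 z) (Dlayer l.+1 z v) end.

Lemma Dlayer_ok l (g : R -> signals R) v (t0 : R) :
  (K P l.+1 <= M P l)%N ->
  (forall i, (0 < i <= N P l.+1)%N -> forall t : R, derivable (f P l.+1 i) t 1) ->
  (forall i p, inr l i p -> is_derive t0 (1:R) (fun t => g t i p) (v i p)) ->
  forall i p, inr l.+1 i p ->
  is_derive t0 (1:R) (fun t => layer P l.+1 (g t) i p) (Dlayer l.+1 (g t0) v i p).
Proof.
move=> HK Hf Hg i p Hip; rewrite /Dlayer Hip /layer.
apply: isd_comp; first by apply: Hf; case/andP: Hip.
rewrite /preact.
apply: is_derive_eq.
  apply: isd_add.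
  eapply isd_sum => j Hj; apply: isd_sum => d Hd; apply: isd_sum => k Hk.
  apply: isd_scal; apply: isd_exp; apply: Hg.
  move: Hj Hk Hip HK; rewrite /inr !mem_index_iota /=; lia.
rewrite addr0; apply: eq_bigr => j _; apply: eq_bigr => d _; apply: eq_bigr => k _.
by rewrite mulrA.
Qed.


Lemma Drun_ok n : forall l (g : R -> signals R) v (t0 : R),
  (l + n <= L P)%N ->
  (forall l', (1 <= l' <= L P)%N -> (K P l' <= M P l'.-1)%N) ->
  (forall l' i, (1 <= l' <= L P)%N -> (0 < i <= N P l')%N ->
     forall t : R, derivable (f P l' i) t 1) ->
  (forall i p, inr l i p -> is_derive t0 (1:R) (fun t => g t i p) (v i p)) ->
  forall i p, inr (l + n) i p ->
  is_derive t0 (1:R) (fun t => run P l n (g t) i p) (Drun l n (g t0) v i p).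
Proof.
elim: n => [|n IH] l g v t0 Hn HK Hf Hg i p.
  by rewrite addn0 /=; apply: Hg.
move=> Hip /=.
apply: (IH l.+1 (fun t => layer P l.+1 (g t))) => //.
- by rewrite addSnnS.
- move=> i' p' Hi'; apply: Dlayer_ok => //.
  + by apply: HK; apply/andP; split => //; move: Hn; lia.
  + by move=> i0 Hi0; apply: Hf => //; apply/andP; split => //; move: Hn; lia.
- by rewrite addSnnS.
Qed.

Lemma Dlayer_add l z (v1 v2 : signals R) :
  Dlayer l z (fun i p => v1 i p + v2 i p) =
  (fun i p => Dlayer l z v1 i p + Dlayer l z v2 i p).
Proof.
apply/funext => i; apply/funext => p; rewrite /Dlayer; case: ifP => _; last by rewrite addr0.
rewrite -mulrDr; congr (_ * _); rewrite -big_split; apply: eq_bigr => j _.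
rewrite -big_split; apply: eq_bigr => d _.
rewrite -big_split; apply: eq_bigr => k _ /=.
by rewrite !mulrDr.
Qed.

Lemma Dlayer_scale l z c (v : signals R) :
  Dlayer l z (fun i p => c * v i p) = (fun i p => c * Dlayer l z v i p).
Proof.
apply/funext => i; apply/funext => p; rewrite /Dlayer; case: ifP => _; last by rewrite mulr0.
rewrite mulrCA; congr (_ * _); rewrite mulr_sumr; apply: eq_bigr => j _.
rewrite mulr_sumr; apply: eq_bigr => d _.
rewrite mulr_sumr; apply: eq_bigr => k _ /=.
ring.
Qed.

Lemma Dlayer_zero l z : Dlayer l z (fun _ _ => 0) = (fun _ _ => 0).
Proof.
have := Dlayer_scale l z 0 (fun _ _ => 0).
rewrite (_ : (fun _ _ => 0 * 0) = (fun _ _ => 0)) => [->|].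
  by apply/funext => i; apply/funext => p; rewrite mul0r.
by apply/funext => i; apply/funext => p; rewrite mul0r.
Qed.

Lemma Drun_add n : forall l z (v1 v2 : signals R),
  Drun l n z (fun i p => v1 i p + v2 i p) =
  (fun i p => Drun l n z v1 i p + Drun l n z v2 i p).
Proof. by elim: n => [|n IH] l z v1 v2 //=; rewrite Dlayer_add IH. Qed.

Lemma Drun_scale n : forall l z c (v : signals R),
  Drun l n z (fun i p => c * v i p) = (fun i p => c * Drun l n z v i p).
Proof. by elim: n => [|n IH] l z c v //=; rewrite Dlayer_scale IH. Qed.

Lemma Drun_zero n : forall l z, Drun l n z (fun _ _ => 0) = (fun _ _ => 0).
Proof. by elim: n => [|n IH] l z //=; rewrite Dlayer_zero IH. Qed.

Lemma Drun_sum n l z (s : seq nat) (V : nat -> signals R) :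
  Drun l n z (fun i p => \sum_(a <- s) V a i p) =
  (fun i p => \sum_(a <- s) Drun l n z (V a) i p).
Proof.
elim: s => [|a s IH].
  rewrite (_ : (fun i p => \sum_(a <- [::]) V a i p) = (fun _ _ => 0)).
    by rewrite Drun_zero; apply/funext => i; apply/funext => p; rewrite big_nil.
  by apply/funext => i; apply/funext => p; rewrite big_nil.
rewrite (_ : (fun i p => \sum_(a0 <- a :: s) V a0 i p) =
   (fun i p => V a i p + (fun i p => \sum_(a0 <- s) V a0 i p) i p)).
  rewrite Drun_add IH; apply/funext => i; apply/funext => p; by rewrite big_cons.
by apply/funext => i; apply/funext => p; rewrite big_cons.
Qed.


Lemma isd_scalev (V : normedModType R) (k : R -> R) dk (c : V) (t0 : R) :
  is_derive t0 (1:R) k dk -> is_derive t0 (1:R) (fun t => k t *: c) (dk *: c).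
Proof.
case=> dk1 <-.
have dk' : differentiable k t0 by apply/derivable1_diffP.
apply: DeriveDef.
  exact/diff_derivable/differentiableZl.
rewrite deriveE; last exact: differentiableZl.
by rewrite diffZl // -deriveE.
Qed.

Lemma chain_eps (n1 n2 : nat) (eps : 'M[R]_(n1,n2) -> R)
  (a : 'I_n1 -> 'I_n2 -> R -> R) (da : 'I_n1 -> 'I_n2 -> R) (t0 : R) :
  (forall Y, differentiable eps Y) ->
  (forall i j, is_derive t0 (1:R) (a i j) (da i j)) ->
  derive1 (fun t => eps (\matrix_(i,j) a i j t)) t0 =
  'd eps (\matrix_(i,j) a i j t0) (\matrix_(i,j) da i j).
Proof.
move=> Heps Ha.
pose A := fun t => \matrix_(i,j) a i j t.
have HA : A = \sum_(i < n1) \sum_(j < n2) (fun t => a i j t *: delta_mx i j).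
  apply/funext => t; rewrite fct_sumE /A [LHS]matrix_sum_delta.
  apply: eq_bigr => i _; rewrite fct_sumE; apply: eq_bigr => j _.
  by rewrite mxE.
have dA : is_derive t0 (1:R) A (\matrix_(i,j) da i j).
  rewrite HA [X in is_derive _ _ _ X]matrix_sum_delta.
  apply: is_derive_sum => i; apply: is_derive_sum => j.
  rewrite mxE; exact: isd_scalev.
have dA1 : differentiable A t0 by apply/derivable1_diffP; case: dA.
rewrite (_ : (fun t => eps (\matrix_(i,j) a i j t)) = eps \o A) //.
rewrite derive1E'; last exact: differentiable_comp.
rewrite diff_comp //= -[X in 'd eps _ X = _]deriveE //.
by case: dA => _ ->.
Qed.


Definition ev (j m : nat) : signals R :=
  fun j' m' => if (j' == j) && (m' == m) then 1 else 0.

Definition Mat (X : signals R) : 'M[R]_(N P (L P), M P (L P)) :=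
  \matrix_(i < N P (L P), k < M P (L P)) X i.+1 k.

Lemma upd_id (z : signals R) j m : upd z j m (z j m) = z.
Proof.
apply/funext => a; apply/funext => b; rewrite /upd.
by case: ifP => // /andP[/eqP -> /eqP ->].
Qed.

Lemma dEdy_formula (eps : 'M[R]_(N P (L P), M P (L P)) -> R) y0 l j m :
  (l <= L P)%N ->
  (forall l', (1 <= l' <= L P)%N -> (K P l' <= M P l'.-1)%N) ->
  (forall l' i, (1 <= l' <= L P)%N -> (0 < i <= N P l')%N ->
     forall t : R, derivable (f P l' i) t 1) ->
  (forall Y, differentiable eps Y) ->
  inr l j m ->
  dEdy P eps y0 l j m =
  'd eps (Mat (run P l (L P - l) (outp P y0 l)))
         (Mat (Drun l (L P - l) (outp P y0 l) (ev j m))).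
Proof.
move=> Hl HK Hf Heps Hjm.
rewrite /dEdy /loss_at.
have Hd : forall (i : 'I_(N P (L P))) (k : 'I_(M P (L P))),
  is_derive (outp P y0 l j m) (1:R)
    (fun t => run P l (L P - l) (upd (outp P y0 l) j m t) i.+1 k)
    (Drun l (L P - l) (outp P y0 l) (ev j m) i.+1 k).
  move=> i k.
  have H := @Drun_ok (L P - l) l (fun t => upd (outp P y0 l) j m t) (ev j m) (outp P y0 l j m).
  rewrite /= upd_id in H; apply: H => //.
  - by rewrite subnKC.
  - move=> i' p' _; rewrite /upd /ev; case: ifP => _; [exact: isd_id | exact: isd_cst].
  - by rewrite subnKC // /inr ltn_ord andbT /=.
rewrite (chain_eps _ _ _ _ _ _ Heps Hd).
by rewrite upd_id.
Qed.


Lemma sum_pick lo hi y (F : nat -> R) :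
  \sum_(lo <= x < hi) (if x == y then F x else 0) =
  if (lo <= y < hi)%N then F y else 0.
Proof.
case: ifP => Hy.
  rewrite (bigD1_seq y) /= ?mem_index_iota ?iota_uniq // eqxx big1 ?addr0 //.
  by move=> x Hx; rewrite (negbTE Hx).
apply: big1_seq => x /andP[_ Hx]; case: eqP => // exy; subst x.
by rewrite mem_index_iota Hy in Hx.
Qed.

Lemma sum_shift (Mp k m : nat) (F : nat -> R) :
  \sum_(0 <= m' < Mp) (if (m' + k == m)%N then F m' else 0) =
  if ((k <= m) && (m - k < Mp))%N then F (m - k)%N else 0.
Proof.
case Hkm: (k <= m)%N => /=.
  rewrite -(sum_pick 0 Mp (m - k)%N F) /=.
  apply: eq_bigr => m' _.
  have -> : (m' + k == m)%N = (m' == m - k)%N.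
    by apply/idP/idP => /eqP H; apply/eqP; lia.
  by [].
apply: big1_seq => x _; case: ifP => // /eqP H; exfalso; move: Hkm; lia.
Qed.

Lemma Dlayer_decomp l z (v : signals R) :
  Dlayer l z v = fun a b => \sum_(1 <= i < (N P l).+1) \sum_(0 <= k < M P l)
     Dlayer l z v i k * ev i k a b.
Proof.
apply/funext => a; apply/funext => b.
rewrite (eq_bigr (fun i => if i == a then
    (if (0 <= b < M P l)%N then Dlayer l z v a b else 0) else 0)); last first.
  move=> i _; rewrite /ev; case: (eqVneq i a) => [->|ne].
    rewrite -sum_pick; apply: eq_bigr => k _ /=.
    by case: (eqVneq b k) => [_|nk] /=; rewrite ?mulr1 ?mulr0.
  by rewrite big1 // => k _; rewrite mulr0.
rewrite sum_pick.
case Ha: (1 <= a < (N P l).+1)%N; case Hb: (0 <= b < M P l)%N => //;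
  rewrite /Dlayer; (have -> : inr l a b = false by rewrite /inr; move: Ha Hb; lia); by [].
Qed.

Lemma Drun_sum2 n l z (s1 s2 : seq nat) (c : nat -> nat -> R) (E : nat -> nat -> signals R) :
  Drun l n z (fun a b => \sum_(i <- s1) \sum_(k <- s2) c i k * E i k a b) =
  (fun a b => \sum_(i <- s1) \sum_(k <- s2) c i k * Drun l n z (E i k) a b).
Proof.
rewrite (Drun_sum n l z s1 (fun i a b => \sum_(k <- s2) c i k * E i k a b)).
apply/funext => a; apply/funext => b; apply: eq_bigr => i _.
rewrite (Drun_sum n l z s2 (fun k a b => c i k * E i k a b)).
apply: eq_bigr => k _.
by rewrite (Drun_scale n l z (c i k) (E i k)).
Qed.


Lemma dZ (V : normedModType R) (g : V -> R) x (c : R) v :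
  'd g x (c *: v) = c * 'd g x v.
Proof. by rewrite linearZ. Qed.

Lemma Mat_sum2 (s1 s2 : seq nat) (c : nat -> nat -> R) (X : nat -> nat -> signals R) :
  Mat (fun a b => \sum_(i <- s1) \sum_(k <- s2) c i k * X i k a b) =
  \sum_(i <- s1) \sum_(k <- s2) c i k *: Mat (X i k).
Proof.
apply/matrixP => a b; rewrite !mxE summxE; apply: eq_bigr => i _.
rewrite summxE; apply: eq_bigr => k _; by rewrite !mxE.
Qed.

End Helpers.

Theorem proposition2 (R : realType) (P : pnn R)
  (eps : 'M[R]_(N P (L P), M P (L P)) -> R) (y0 : signals R) :
  (2 <= L P)%N ->
  (forall l, (1 <= l <= L P)%N ->
     [/\ (0 < N P l)%N, (0 < K P l)%N, (0 < D P l)%N & (K P l <= M P l.-1)%N]) ->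
  (forall l i, (1 <= l <= L P)%N -> (1 <= i <= N P l)%N ->
     forall t : R, derivable (f P l i) t 1) ->
  (forall Y, differentiable eps Y) ->
  forall l j m, (1 <= l <= L P - 1)%N -> (1 <= j <= N P l)%N -> (m < M P l)%N ->
  dEdy P eps y0 l j m =
  \sum_(1 <= d < (D P l.+1).+1)
     d%:R * (\sum_(1 <= i < (N P l.+1).+1)
               conv1d (K P l.+1) (wflip P l.+1 i j d) (gpad P eps y0 l.+1 i) m)
          * (outp P y0 l j m) ^+ (d - 1).
Proof.
move=> HL Hsh Hf Heps l j m Hl Hj Hm.
have HK : forall l', (1 <= l' <= L P)%N -> (K P l' <= M P l'.-1)%N.
  by move=> l' H; case: (Hsh l' H).
have Hjm : inr P l j m by rewrite /inr Hj Hm.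
have HlL : (l <= L P)%N by move: Hl; lia.
rewrite (@dEdy_formula R P eps y0 l j m HlL HK Hf Heps Hjm).
set z0 := outp P y0 l.
have EL : (L P - l = (L P - l.+1).+1)%N by move: Hl HL; lia.
have E1 : Drun P l (L P - l) z0 (ev j m) =
   Drun P l.+1 (L P - l.+1) (outp P y0 l.+1) (Dlayer P l.+1 z0 (ev j m)).
  by rewrite EL.
have E2 : run P l (L P - l) z0 = run P l.+1 (L P - l.+1) (outp P y0 l.+1).
  by rewrite EL.
rewrite E1 E2 Dlayer_decomp Drun_sum2 Mat_sum2 raddf_sum.
have HM1 : (0 < M P l.+1)%N by rewrite /= addn1.
have HKl : (0 < K P l.+1)%N by case: (Hsh l.+1); [move: Hl HL; lia|].
have HKM : (K P l.+1 <= M P l)%N by apply: (HK l.+1); move: Hl HL; lia.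
set y := z0 j m.
pose A i d q := w P l.+1 i j d q * (d%:R * y ^+ d.-1).
pose G i q := if ((q <= m) && (m - q < M P l.+1))%N then dEdx P eps y0 l.+1 i (m - q)%N else 0.
rewrite (eq_big_seq (fun i => \sum_(1 <= d < (D P l.+1).+1) \sum_(0 <= q < K P l.+1)
            A i d q * G i q)); last first.
  move=> i Hi; rewrite raddf_sum.
  rewrite (eq_big_seq (fun k => \sum_(1 <= d < (D P l.+1).+1) \sum_(0 <= q < K P l.+1)
      A i d q * (if (k + q == m)%N then dEdx P eps y0 l.+1 i k else 0))); last first.
    move=> k Hk; apply: etrans; first exact: dZ.
    have Hik : inr P l.+1 i k by rewrite /inr; move: Hi Hk; rewrite !mem_index_iota; lia.
    have Hl1 : (l.+1 <= L P)%N by move: Hl HL; lia.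
    rewrite -(@dEdy_formula R P eps y0 l.+1 i k Hl1 HK Hf Heps Hik).
    rewrite /Dlayer Hik /dEdx /=.
    rewrite (eq_big_seq (fun j' => if j' == j then
        \sum_(1 <= d < (D P l.+1).+1) \sum_(0 <= q < K P l.+1)
          w P l.+1 i j d q * (d%:R * z0 j (k + q)%N ^+ d.-1 *
             (if (k + q == m)%N then 1 else 0)) else 0)); last first.
      move=> j' _; rewrite /ev; case: (eqVneq j' j) => [->|ne].
        by [].
      by rewrite big1 // => d _; rewrite big1 // => q _; rewrite /= mulr0 mulr0.
    rewrite sum_pick.
    have -> : (1 <= j < (N P l.+1.-1).+1)%N by [].
    rewrite -mulrA mulr_suml mulr_sumr; apply: eq_bigr => d _.
    rewrite mulr_suml mulr_sumr; apply: eq_bigr => q _.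
    case: eqP => [H|_]; last by rewrite !(mulr0, mul0r).
    rewrite H /A /y -/z0; ring.
  rewrite exchange_big /=; apply: eq_bigr => d _.
  rewrite exchange_big /=; apply: eq_bigr => q _.
  rewrite -mulr_sumr; congr (_ * _).
  by rewrite sum_shift.
rewrite exchange_big /=; apply: eq_bigr => d _.
rewrite mulr_sumr mulr_suml; apply: eq_bigr => i _.
rewrite /conv1d big_nat_rev /= mulr_sumr mulr_suml; apply: eq_big_seq => q Hq.
rewrite mem_index_iota in Hq.
rewrite /wflip /gpad add0n.
have -> : (K P l.+1 - 1 - q = K P l.+1 - q.+1)%N by move: Hq HKl; lia.
have Ec : ((K P l.+1 - 1 <= m + q) &&
          (m + q <= M P l.+1 + K P l.+1 - 2))%N =
          ((K P l.+1 - q.+1 <= m) && (m - (K P l.+1 - q.+1) < M P l.+1))%N.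
  apply/idP/idP => /andP[h1 h2]; apply/andP; split; move: h1 h2 Hq HKl HM1; lia.
rewrite /A /G Ec; case: ifP => [/andP[h1 h2]|_]; last by rewrite !(mulr0, mul0r).
have -> : (m + q - (K P l.+1 - 1) = m - (K P l.+1 - q.+1))%N by move: h1 Hq HKl; lia.
rewrite subn1; ring.
Qed.
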